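(* Let $n\ge2$ and let $x_1,\dots,x_n,y_1,\dots,y_{n-1}$ be the distinct elements of $[2n-1]$. Let $u$ be the tableau of shape $2^{n-1}1$ with first column $x_1,\dots,x_n$ and second column $y_1,\dots,y_{n-1}$, and for $i\in[n]$ let $s_i$ be the tableau of shape $2^{n-1}1$ with first column $y_1,\dots,y_{n-1},x_i$ and second column $x_1,\dots,\widehat{x_i},\dots,x_n$ (top to bottom). Then in $S^{2^{n-1}1}$, \[\varepsilon_u=\sum_{i=1}^n(-1)^{n-i}\varepsilon_{s_i}.\] Consequently $\tilde\Psi\circ\varphi=0$ on $V_{n,3}$.
   Context: For a tableau $t$ (filling of a Young diagram using each element of $[N]$ once) with column stabilizer $C_t$, $\{t\}$ is its row tabloid and $\varepsilon_t=\sum_{\beta\in C_t}\operatorname{sgn}(\beta)\{\beta t\}$; $S^\lambda$ is the Specht module spanned by the $\varepsilon_t$. $V_{n,3}$ is the $\mathbb C$-span of left-comb brackets $[[x_1,\dots,x_n],y_1,\dots,y_{n-1}]$ with $\{x_i\}\cup\{y_j\}=[2n-1]$, modulo antisymmetry in the $x$'s and separately in the $y$'s. $\varphi:V_{n,3}\to V_{n,3}$ is $\varphi([[x_1,\dots,x_n],y_1,\dots,y_{n-1}])=[[x_1,\dots,x_n],y_1,\dots,y_{n-1}]-\sum_{i=1}^n(-1)^{n-i}[[y_1,\dots,y_{n-1},x_i],x_1,\dots,\widehat{x_i},\dots,x_n]$, and $\tilde\Psi:V_{n,3}\to S^{2^{n-1}1}$ sends $[[x_1,\dots,x_n],y_1,\dots,y_{n-1}]$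 to $\varepsilon_t$, $t$ the tableau with first column the $x$'s and second column the $y$'s. *)

(* Defs.v *)
From HB Require Import structures.
From mathcomp Require Import all_boot all_order all_algebra all_fingroup.
Set Implicit Arguments. Unset Strict Implicit. Unset Printing Implicit Defensive.
Import GRing.Theory.
Local Open Scope ring_scope.

(* A tableau with entries in [N] = 'I_N, given as the list of its rows
   (top to bottom), each row listed left to right. *)
Definition tableau (N : nat) := seq (seq 'I_N).

Definition row_of N (t : tableau N) (x : 'I_N) : nat := find (fun r => x \in r) t.
Definition col_of N (t : tableau N) (x : 'I_N) : nat :=
  index x (nth [::] t (row_of t x)).

(* Row tabloids {t}: a tabloid is determined by the row in which each entry lies.
   We encode it as the function entry |-> row index (rows are < N+1 for tableaux
   of size N). *)
Definition tabloid N := {ffun 'I_N -> 'I_N.+1}.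
Definition tabloid_of N (t : tableau N) : tabloid N :=
  [ffun x => inord (row_of t x)].

Definition act_tab N (beta : {perm 'I_N}) (t : tableau N) : tableau N :=
  map (map beta) t.

Definition col_stab N (t : tableau N) : {set {perm 'I_N}} :=
  [set beta : {perm 'I_N} | [forall x, col_of t (beta x) == col_of t x]].

(* Elements of the permutation module M^lambda (formal R-linear combinations of
   tabloids) are represented by their coefficient functions. *)
Definition tabloid_module (R : nzRingType) N := {ffun tabloid N -> R}.

Definition polytabloid (R : nzRingType) N (t : tableau N) : tabloid_module R N :=
  [ffun T => \sum_(beta in col_stab t)
                (-1) ^+ (odd_perm beta) * (T == tabloid_of (act_tab beta t))%:R].

(* The tableau of shape 2^(size c2) 1^(size c1 - size c2) with first column c1
   and second column c2 (each listed top to bottom), assuming size c2 <= size c1. *)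
Definition tab_of_cols N (c1 c2 : seq 'I_N) : tableau N :=
  [seq [:: p.1; p.2] | p <- zip c1 c2] ++ [seq [:: a] | a <- drop (size c2) c1].

(* Main.v *)
Require Import Defs.
From HB Require Import structures.
From mathcomp Require Import all_boot all_order all_algebra all_fingroup.
From mathcomp Require Import zify ring.
Set Implicit Arguments. Unset Strict Implicit. Unset Printing Implicit Defensive.
Import GRing.Theory.
Local Open Scope ring_scope.
Lemma prod_bool (I : finType) (P : pred I) :
  \prod_(i : I) ((P i)%:R : int) = ([forall i, P i])%:R.
Proof.
case: (boolP [forall i, P i]) => [/forallP H|/forallPn [i Hi]].
  by rewrite big1 // => i _; rewrite H.
by rewrite (bigD1 i) //= (negbTE Hi) mul0r.
Qed.

Lemma row_act N (t : tableau N) (b : {perm 'I_N}) (i : 'I_N) :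
  row_of (act_tab b t) (b i) = row_of t i.
Proof.
rewrite /row_of /act_tab find_map; apply: eq_find => r /=.
by rewrite mem_map //; apply: perm_inj.
Qed.

Definition Amx N (t : tableau N) (T : tabloid N) : 'M[int]_N :=
  \matrix_(w, v) ((col_of t v == col_of t w)%:R * (T v == inord (row_of t w))%:R).

Lemma poly_det N (t : tableau N) (T : tabloid N) :
  polytabloid int t T = \det (Amx t T).
Proof.
rewrite /polytabloid ffunE /determinant big_mkcond /=.
apply: eq_bigr => b _.
have -> : \prod_i Amx t T i (b i) =
   ([forall i, col_of t (b i) == col_of t i])%:R *
   ([forall i, T (b i) == inord (row_of t i)])%:R.
  by rewrite -!prod_bool -big_split /=; apply: eq_bigr => i _; rewrite mxE.
have -> : (T == tabloid_of (act_tab b t)) = [forall i, T (b i) == inord (row_of t i)].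
  apply/eqP/forallP => [-> i|H].
    by rewrite /tabloid_of ffunE row_act.
  apply/ffunP => w; rewrite /tabloid_of ffunE -{2}(permKV b w) row_act.
  by apply/eqP; rewrite -{1}(permKV b w) H.
rewrite inE; case: ifP => _; first by rewrite mul1r.
by rewrite mul0r mulr0.
Qed.

Lemma det_conj N (A : 'M[int]_N) (s : 'S_N) : \det (row_perm s (col_perm s A)) = \det A.
Proof.
rewrite row_permE col_permE !det_mulmx !det_perm odd_permV.
by rewrite mulrCA -signr_addb addbb expr0 mulr1.
Qed.
Section Shape.
Variables (n m : nat) (hmn : (m <= n)%N) (a : 'I_n -> 'I_(n+m)) (b : 'I_m -> 'I_(n+m)).
Hypotheses (ia : injective a) (ib : injective b) (ab : forall i j, a i != b j).

Definition rowseq (k : 'I_n) : seq 'I_(n+m) :=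
  a k :: (if insub (val k) is Some k' then [:: b k'] else [::]).

Lemma t_rows : tab_of_cols (map a (enum 'I_n)) (map b (enum 'I_m)) = map rowseq (enum 'I_n).
Proof.
have Sa : size (map a (enum 'I_n)) = n by rewrite size_map size_enum_ord.
have Sb : size (map b (enum 'I_m)) = m by rewrite size_map size_enum_ord.
have Se : size (enum 'I_n) = n by rewrite size_enum_ord.
rewrite /tab_of_cols; apply: (@eq_from_nth _ [::]).
  rewrite Sb size_cat size_map size_zip Sa Sb size_map size_drop Sa size_map Se; lia.
move=> k; rewrite Sb size_cat size_map size_zip Sa Sb size_map size_drop Sa => hk0.
have hk : (k < n)%N by lia.
pose ko := Ordinal hk.
rewrite (nth_map ko) ?size_enum_ord //.
have -> : nth ko (enum 'I_n) k = ko by have := nth_ord_enum ko ko.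
rewrite nth_cat size_map size_zip Sa Sb.
case: ifP => hkm.
  have hkm' : (k < m)%N by lia.
  pose ko' := Ordinal hkm'.
  rewrite (nth_map (a ko, a ko)); last by rewrite size_zip Sa Sb.
  rewrite nth_zip_cond size_zip Sa Sb hkm /=.
  rewrite (nth_map ko) ?size_enum_ord // (nth_map ko') ?size_enum_ord //.
  have -> : nth ko (enum 'I_n) k = ko by have := nth_ord_enum ko ko.
  have -> : nth ko' (enum 'I_m) k = ko' by have := nth_ord_enum ko' ko'.
  by rewrite /rowseq /= insubT.
rewrite (nth_map (a ko)); last by rewrite size_drop Sa; lia.
rewrite nth_drop (nth_map ko) ?size_enum_ord; last by lia.
have -> : (m + (k - minn n m))%N = k by lia.
have -> : nth ko (enum 'I_n) k = ko by have := nth_ord_enum ko ko.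
rewrite /rowseq /= insubN //; lia.
Qed.


Let t := tab_of_cols (map a (enum 'I_n)) (map b (enum 'I_m)).

Lemma mem_rowseq_a k j : (a k \in rowseq j) = (j == k).
Proof.
rewrite /rowseq in_cons (inj_eq ia) eq_sym.
by case: insub => [k'|] /=; rewrite ?mem_seq1 ?in_nil ?(negbTE (ab _ _)) ?orbF.
Qed.

Lemma mem_rowseq_b k j : (b k \in rowseq j) = (val j == val k).
Proof.
rewrite /rowseq in_cons eq_sym (negbTE (ab _ _)) /=.
case: insubP => [k' hj <-|hj] /=.
  by rewrite mem_seq1 (inj_eq ib) eq_sym.
apply/esym/negbTE; apply: contra hj => /eqP ->; exact: ltn_ord.
Qed.

Lemma row_a k : row_of t (a k) = k.
Proof.
rewrite /row_of /t t_rows find_map.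
rewrite (@eq_find _ _ (pred1 k)); last by move=> j; rewrite /= mem_rowseq_a.
by rewrite -[find _ _]/(index k (enum 'I_n)) index_enum_ord.
Qed.

Lemma row_b k : row_of t (b k) = k.
Proof.
rewrite /row_of /t t_rows find_map.
rewrite (@eq_find _ _ (pred1 (widen_ord hmn k))); last first.
  by move=> j; rewrite /= mem_rowseq_b.
by rewrite -[find _ _]/(index (widen_ord hmn k) (enum 'I_n)) index_enum_ord.
Qed.

Lemma col_a k : col_of t (a k) = 0%N.
Proof.
rewrite /col_of row_a /t t_rows (nth_map k) ?size_enum_ord //.
by rewrite nth_ord_enum /rowseq /= eqxx.
Qed.

Lemma col_b k : col_of t (b k) = 1%N.
Proof.
rewrite /col_of row_b /t t_rows (nth_map (widen_ord hmn k)) ?size_enum_ord //.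
have -> : nth (widen_ord hmn k) (enum 'I_n) k = widen_ord hmn k.
  by have := nth_ord_enum (widen_ord hmn k) (widen_ord hmn k).
  by rewrite /rowseq /= valK /= (negbTE (ab _ _)) eqxx.
by rewrite (leq_trans (ltn_ord k)).

Qed.


Definition gfun (i : 'I_(n+m)) : 'I_(n+m) :=
  match split i with inl k => a k | inr k => b k end.

Lemma gfun_inj : injective gfun.
Proof.
move=> i j; rewrite -[i]splitK -[j]splitK /gfun !unsplitK.
case: (split i) => i'; case: (split j) => j' /=.
- by move/ia->.
- by move=> h; move: (ab i' j'); rewrite h eqxx.
- by move=> h; move: (ab j' i'); rewrite h eqxx.
- by move/ib->.
Qed.

Definition G := perm gfun_inj.

Lemma shape_det T : polytabloid int t T =
  \det (\matrix_(r, j < n) ((T (a j) == inord r)%:R : int)) *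
  \det (\matrix_(r, j < m) ((T (b j) == inord r)%:R : int)).
Proof.
rewrite poly_det -(det_conj _ G) -(det_ublock _ 0).
congr (\det _); apply/matrixP => i j.
rewrite -[i]splitK -[j]splitK.
case: (split i) => i'; case: (split j) => j'.
- rewrite [LHS]mxE [LHS]mxE !permE /gfun !unsplitK mxE !col_a row_a eqxx mul1r.
  by rewrite (block_mxEul _ _ _ _ i' j') mxE.
- rewrite [LHS]mxE [LHS]mxE !permE /gfun !unsplitK mxE col_a col_b mul0r.
  by rewrite (block_mxEur _ _ _ _ i' j') mxE.
- rewrite [LHS]mxE [LHS]mxE !permE /gfun !unsplitK mxE col_a col_b mul0r.
  by rewrite (block_mxEdl _ _ _ _ i' j') mxE.
- rewrite [LHS]mxE [LHS]mxE !permE /gfun !unsplitK mxE !col_b row_b eqxx mul1r.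
  by rewrite (block_mxEdr _ _ _ _ i' j') mxE.
Qed.

End Shape.
Lemma plucker m (p : 'I_m.+1 -> nat -> int) (q : 'I_m -> nat -> int) :
  \det (\matrix_(r, j < m.+1) p j r) * \det (\matrix_(r, j < m) q j r) =
  \sum_(i < m.+1) (-1) ^+ (m.+1 - i.+1) *
    (\det (\matrix_(r, j < m.+1) (if unlift ord_max j is Some k then q k r else p i r)) *
     \det (\matrix_(r, j < m) p (lift i j) r)).
Proof.
set X := \matrix_(r, j < m.+1) p j r.
set Y' := \matrix_(r, j < m.+1) (if unlift ord_max j is Some k then q k r else 0).
pose kap r := cofactor Y' r ord_max.
have hY : forall i, \det (\matrix_(r, j < m.+1) (if unlift ord_max j is Some k then q k r else p i r))
    = \sum_(r < m.+1) p i r * kap r.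
  move=> i; rewrite (expand_det_col _ ord_max); apply: eq_bigr => r _.
  rewrite mxE unlift_none; congr (_ * _); rewrite /kap /cofactor; congr (_ * \det _).
  by apply/matrixP => r' j'; rewrite !mxE liftK.
have hQ : \det (\matrix_(r, j < m) q j r) = kap ord_max.
  rewrite /kap /cofactor -signr_odd addnn odd_double expr0 mul1r.
  by congr (\det _); apply/matrixP => r j; rewrite !mxE liftK lift_max.
have hC : forall i, cofactor X ord_max i = (-1) ^+ (m + i) * \det (\matrix_(r, j < m) p (lift i j) r).
  move=> i; rewrite /cofactor; congr (_ * \det _).
  by apply/matrixP => r j; rewrite !mxE lift_max.
have key : \det X * kap ord_max = \sum_i (\sum_(r < m.+1) p i r * kap r) * cofactor X ord_max i.
  transitivity (\sum_(r < m.+1) kap r * ((X *m \adj X) r ord_max)).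
    rewrite mul_mx_adj (bigD1 ord_max) //= big1 => [|r hr]; last first.
      by rewrite mxE (negbTE hr) mulr0n mulr0.
    by rewrite mxE eqxx mulr1n addr0 mulrC.
  under [RHS]eq_bigr do rewrite mulr_suml.
  rewrite exchange_big /=; apply: eq_bigr => r _.
  rewrite mxE mulr_sumr; apply: eq_bigr => i _.
  rewrite !mxE; ring.
rewrite hQ key; apply: eq_bigr => i _.
rewrite hY hC mulrA mulrA; congr (_ * _); rewrite mulrC; congr (_ * _).
rewrite subSS -signr_odd -[in RHS]signr_odd oddB ?oddD //.
by rewrite -ltnS ltn_ord.
Qed.
Lemma shape_detN N n m (hN : (n + m)%N = N) (hmn : (m <= n)%N)
  (a : 'I_n -> 'I_N) (b : 'I_m -> 'I_N)
  (ia : injective a) (ib : injective b) (ab : forall i j, a i != b j) (T : tabloid N) :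
  polytabloid int (tab_of_cols (map a (enum 'I_n)) (map b (enum 'I_m))) T =
  \det (\matrix_(r, j < n) ((T (a j) == inord r)%:R : int)) *
  \det (\matrix_(r, j < m) ((T (b j) == inord r)%:R : int)).
Proof. by subst N; apply: shape_det. Qed.

Lemma filter_lift m (i : 'I_m.+1) :
  [seq j <- enum 'I_m.+1 | j != i] = map (lift i) (enum 'I_m).
Proof.
apply: (@irr_sorted_eq _ (fun u v : 'I_m.+1 => (u < v)%N)).
- by move=> ? ? ?; apply: ltn_trans.
- by move=> ?; rewrite ltnn.
- apply: sorted_filter; first by move=> ? ? ?; apply: ltn_trans.
  by have := iota_ltn_sorted 0 m.+1; rewrite -val_enum_ord sorted_map.
- rewrite sorted_map.
  have := iota_ltn_sorted 0 m; rewrite -val_enum_ord sorted_map.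
  apply: sub_sorted => u v /=; rewrite /bump.
  by case: leqP => ?; case: leqP => ?; rewrite ?addn0 ?addn1; lia.
- move=> z; rewrite mem_filter mem_enum andbT.
  case: (unliftP i z) => [k ->|->].
    rewrite eq_sym neq_lift mem_map ?mem_enum //; exact: lift_inj.
  rewrite eqxx; apply/esym/negbTE/mapP => [[k _ h]].
  by move: (neq_lift i k); rewrite -h eqxx.
Qed.

Lemma rcons_a (T : Type) m (y : 'I_m -> T) (z : T) :
  rcons (map y (enum 'I_m)) z =
  map (fun j : 'I_m.+1 => if unlift ord_max j is Some k then y k else z) (enum 'I_m.+1).
Proof.
rewrite enum_ordSr map_rcons -map_comp unlift_none; congr rcons; apply: eq_map => k /=.
have -> : widen_ord (leqnSn m) k = lift ord_max k by apply: ord_inj; rewrite lift_max.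
by rewrite liftK.
Qed.

Lemma poly_int (R : nzRingType) N (t : tableau N) T :
  polytabloid R t T = (polytabloid int t T)%:~R.
Proof.
rewrite /polytabloid !ffunE rmorph_sum; apply: eq_bigr => b _.
by rewrite rmorphM rmorph_sign rmorph_nat.
Qed.

Theorem mainTheorem10 (R : nzRingType) (n : nat) (n_ge2 : (2 <= n)%N)
    (x : 'I_n -> 'I_(2 * n).-1) (y : 'I_n.-1 -> 'I_(2 * n).-1)
    (x_inj : injective x) (y_inj : injective y)
    (xy_disj : forall i j, x i != y j) :
  let u := tab_of_cols [seq x i | i <- enum 'I_n] [seq y j | j <- enum 'I_n.-1] in
  let s := fun i : 'I_n =>
    tab_of_cols (rcons [seq y j | j <- enum 'I_n.-1] (x i))
                [seq x j | j <- enum 'I_n & j != i] in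
  polytabloid R u =
  [ffun T => \sum_(i < n) (-1) ^+ (n - i.+1) * polytabloid R (s i) T].
Proof.
destruct n as [|m]; first by [].
move=> u s; apply/ffunP => T.
have hN : (m.+1 + m)%N = (2 * m.+1).-1 by lia.
pose a' (i : 'I_m.+1) (j : 'I_m.+1) := if unlift ord_max j is Some k then y k else x i.
have E : polytabloid int u T =
    \sum_(i < m.+1) (-1) ^+ (m.+1 - i.+1) * polytabloid int (s i) T.
  rewrite /u (shape_detN hN (leqnSn m) x_inj y_inj xy_disj).
  rewrite (plucker (fun j r => (T (x j) == inord r)%:R) (fun j r => (T (y j) == inord r)%:R)).
  apply: eq_bigr => i _; congr (_ * _).
  rewrite /s rcons_a filter_lift -map_comp.
  have ia : injective (a' i).
    move=> j1 j2; rewrite /a'.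
    case: (unliftP ord_max j1) => [k1 ->|->]; case: (unliftP ord_max j2) => [k2 ->|->];
      rewrite ?liftK ?unlift_none => h //.
    - by rewrite (y_inj _ _ h).
    - by move: (xy_disj i k1); rewrite h eqxx.
    - by move: (xy_disj i k2); rewrite h eqxx.
  have ib : injective (x \o lift i).
    by move=> j1 j2 /= /x_inj /lift_inj.
  have ab : forall j k, a' i j != (x \o lift i) k.
    move=> j k; rewrite /a' /=; case: unlift => [k'|].
      by rewrite eq_sym xy_disj.
    by rewrite (inj_eq x_inj) neq_lift.
  rewrite (shape_detN hN (leqnSn m) ia ib ab); congr (\det _ * _).
  by apply/matrixP => r j; rewrite !mxE /a'; case: unlift.
rewrite poly_int [RHS]ffunE E rmorph_sum; apply: eq_bigr => i _.
by rewrite [in RHS]poly_int rmorphM rmorph_sign.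
Qed.
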